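(* Assume that $H: [0,1]\to\mathbb{R}$ is upper semi-continuous. Let $\widehat H$ be the concave envelope of $H$. Then: (a) If $\liminf_{t\to1}{H(t)-H(1)\over t-1}>-\infty$, then $\widehat H^\prime(1-)>-\infty$. (b) If $\limsup_{t\to0}{H(t)-H(0)\over t}<\infty$, then $\widehat H^\prime(0)<\infty$.
   Context: The concave envelope $\widehat H$ of $H$ is defined by $\widehat H(s)=\inf\{G(s)\mid G\text{ is concave and }G\ge H\text{ on }[0,1]\}$, $s\in[0,1]$. Primes denote right derivatives; $\widehat H'(1-)$ is the left limit at $1$ of the right derivative. *)

(* Defs.v *)
From Stdlib Require Import Reals.
From Coquelicot Require Import Coquelicot.
Open Scope R_scope.

Definition usc_on01 (H : R -> R) : Prop :=
  forall x, 0 <= x <= 1 -> forall eps, 0 < eps ->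
    exists delta, 0 < delta /\
      forall y, 0 <= y <= 1 -> Rabs (y - x) < delta -> H y < H x + eps.

Definition concave_on01 (G : R -> R) : Prop :=
  forall x y t, 0 <= x <= 1 -> 0 <= y <= 1 -> 0 <= t <= 1 ->
    t * G x + (1 - t) * G y <= G (t * x + (1 - t) * y).

Definition env_set (H : R -> R) (s : R) : R -> Prop :=
  fun y => exists G : R -> R,
    concave_on01 G /\ (forall x, 0 <= x <= 1 -> H x <= G x) /\ y = G s.

Definition concave_envelope_Rbar (H : R -> R) (s : R) : Rbar :=
  Glb_Rbar (env_set H s).

(* Real-valued concave envelope (the infimum is finite when H is usc on [0,1]). *)
Definition concave_envelope (H : R -> R) (s : R) : R :=
  real (concave_envelope_Rbar H s).

Definition diffq (f : R -> R) (s : R) : R -> R :=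
  fun h => (f (s + h) - f s) / h.

Definition is_right_deriv (f : R -> R) (s : R) (l : Rbar) : Prop :=
  filterlim (diffq f s) (at_right 0) (Rbar_locally l).

(* Main.v *)
Require Import Defs.
From Stdlib Require Import Reals Lra Psatz Classical.
From Coquelicot Require Import Coquelicot.
Open Scope R_scope.

Lemma usc_bounded (H : R -> R) : usc_on01 H ->
  exists B, forall x, 0 <= x <= 1 -> H x <= B.
Proof.
  intros Husc.
  set (S := fun b => 0 <= b <= 1 /\ exists B, forall y, 0 <= y <= b -> H y <= B).
  assert (HS0 : S 0).
  { split; [lra|]. exists (H 0). intros y Hy. replace y with 0 by lra. lra. }
  assert (Hbd : bound S). { exists 1. intros x [Hx _]. lra. }
  destruct (completeness S Hbd (ex_intro _ 0 HS0)) as [c [Hub Hlub]].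
  assert (Hc0 : 0 <= c) by (apply Hub; exact HS0).
  assert (Hc1 : c <= 1) by (apply Hlub; intros x [Hx _]; lra).
  destruct (Husc c (conj Hc0 Hc1) 1 Rlt_0_1) as [d [Hd Hdc]].
  assert (Hex : exists b, S b /\ c - d < b).
  { destruct (classic (exists b, S b /\ c - d < b)) as [E|E]; [exact E|].
    exfalso. assert (c <= c - d); [|lra].
    apply Hlub. intros x Hx. apply Rnot_lt_le. intro Hlt. apply E. exists x. split; auto. }
  destruct Hex as [b [[Hb [B HB]] Hcb]].
  set (b' := Rmin (c + d/2) 1).
  assert (HSb' : S b').
  { split. unfold b'. split. apply Rmin_glb; lra. apply Rmin_r.
    exists (Rmax B (H c + 1)). intros y Hy.
    destruct (Rle_or_lt y b) as [Hyb|Hyb].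
    - apply Rle_trans with B. apply HB; lra. apply Rmax_l.
    - apply Rle_trans with (H c + 1); [|apply Rmax_r].
      assert (b' <= c + d/2) by apply Rmin_l. assert (b' <= 1) by apply Rmin_r.
      assert (b <= c) by (apply Hub; split; [exact Hb| exists B; exact HB]).
      left. apply Hdc. lra. apply Rabs_def1; lra. }
  assert (b' <= c) by (apply Hub; exact HSb').
  assert (Hc: c = 1).
  { unfold b' in H0. unfold Rmin in H0. destruct (Rle_dec (c + d/2) 1); lra. }
  destruct HSb' as [_ [B' HB']]. exists B'. intros x Hx. apply HB'.
  unfold b'. rewrite Hc. rewrite Rmin_right by lra. lra.
Qed.

Lemma chord f a b c : concave_on01 f -> 0 <= a -> a < b -> b < c -> c <= 1 ->
  (c-b)*f a + (b-a)*f c <= (c-a)*f b.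
Proof.
  intros Hf Ha Hab Hbc Hc.
  set (t := (c-b)/(c-a)).
  assert (Ht: t*(c-a) = c-b) by (unfold t; field; lra).
  assert (0 <= t <= 1) by nra.
  assert (Hk := Hf a c t ltac:(lra) ltac:(lra) H).
  replace (t*a + (1-t)*c) with b in Hk by (unfold t; field; lra).
  replace ((c-b)*f a + (b-a)*f c) with ((c-a)*(t*f a + (1-t)*f c)) by (unfold t; field; lra).
  apply Rmult_le_compat_l; lra.
Qed.

Definition slope (f : R -> R) x y := (f y - f x)/(y - x).

Lemma S1 f a b c : concave_on01 f -> 0 <= a -> a < b -> b < c -> c <= 1 ->
  slope f b c <= slope f a b.
Proof.
  intros Hf Ha Hab Hbc Hc. pose proof (chord f a b c Hf Ha Hab Hbc Hc).
  unfold slope. set (p := (f b - f a)/(b-a)). set (r := (f c - f b)/(c-b)).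
  assert (f b - f a = p*(b-a)) by (unfold p; field; lra).
  assert (f c - f b = r*(c-b)) by (unfold r; field; lra).
  apply Rmult_le_reg_l with ((b-a)*(c-b)). nra. nra.
Qed.

Lemma S2 f a b c : concave_on01 f -> 0 <= a -> a < b -> b < c -> c <= 1 ->
  slope f a c <= slope f a b.
Proof.
  intros Hf Ha Hab Hbc Hc. pose proof (chord f a b c Hf Ha Hab Hbc Hc).
  unfold slope. set (p := (f b - f a)/(b-a)). set (r := (f c - f a)/(c-a)).
  assert (f b - f a = p*(b-a)) by (unfold p; field; lra).
  assert (f c - f a = r*(c-a)) by (unfold r; field; lra).
  apply Rmult_le_reg_l with ((b-a)*(c-a)). nra. nra.
Qed.

Lemma diffq_slope f s h : 0 < h -> diffq f s h = slope f s (s+h).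
Proof. intros. unfold diffq, slope. replace (s+h-s) with h by ring. reflexivity. Qed.

Section Env.
Variable H : R -> R.
Variable B : R.
Hypothesis HB : forall x, 0 <= x <= 1 -> H x <= B.

Lemma env_finite s : 0 <= s <= 1 ->
  concave_envelope_Rbar H s = Finite (concave_envelope H s) /\
  H s <= concave_envelope H s.
Proof.
  intros Hs. unfold concave_envelope.
  destruct (Glb_Rbar_correct (env_set H s)) as [Hlb Hg].
  assert (E1 : Rbar_le (concave_envelope_Rbar H s) B).
  { apply Hlb. exists (fun _ => B). repeat split; auto.
    intros x y t _ _ _. lra. }
  assert (E2 : Rbar_le (H s) (concave_envelope_Rbar H s)).
  { apply Hg. intros y [G [_ [HG ->]]]. simpl. apply HG; auto. }
  unfold concave_envelope_Rbar in *.
  destruct (Glb_Rbar (env_set H s)); simpl in *; try contradiction; auto.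
Qed.

Lemma env_ge s : 0 <= s <= 1 -> H s <= concave_envelope H s.
Proof. intros; apply env_finite; auto. Qed.

Lemma env_le (G : R -> R) s : concave_on01 G -> (forall x, 0 <= x <= 1 -> H x <= G x) ->
  0 <= s <= 1 -> concave_envelope H s <= G s.
Proof.
  intros HG HGH Hs. destruct (env_finite s Hs) as [E _].
  destruct (Glb_Rbar_correct (env_set H s)) as [Hlb _].
  assert (Rbar_le (concave_envelope_Rbar H s) (G s)).
  { apply Hlb. exists G. auto. }
  rewrite E in H0. exact H0.
Qed.

Lemma env_concave : concave_on01 (concave_envelope H).
Proof.
  intros x y t Hx Hy Ht.
  assert (Hz : 0 <= t*x + (1-t)*y <= 1) by nra.
  destruct (env_finite _ Hz) as [E _].
  destruct (Glb_Rbar_correct (env_set H (t*x + (1-t)*y))) as [_ Hg].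
  assert (Rbar_le (t * concave_envelope H x + (1 - t) * concave_envelope H y)
     (concave_envelope_Rbar H (t * x + (1 - t) * y))).
  { apply Hg. intros w [G [HGc [HGH ->]]]. simpl.
    pose proof (env_le G x HGc HGH Hx). pose proof (env_le G y HGc HGH Hy).
    pose proof (HGc x y t Hx Hy Ht). nra. }
  rewrite E in H0. exact H0.
Qed.
End Env.

Definition supq (g : R -> R) (a : R) :=
  real (Lub_Rbar (fun y => exists h, 0 < h < a /\ y = g h)).

Lemma mono_lim (g : R -> R) (a K : R) : 0 < a ->
  (forall h1 h2, 0 < h1 -> h1 < h2 -> h2 < a -> g h2 <= g h1) ->
  (forall h, 0 < h < a -> g h <= K) ->
  (forall h, 0 < h < a -> g h <= supq g a) /\
  (forall K', (forall h, 0 < h < a -> g h <= K') -> supq g a <= K') /\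
  (forall eps, 0 < eps -> exists d, 0 < d /\
      forall h, 0 < h < d -> Rabs (g h - supq g a) < eps).
Proof.
  intros Ha Hmono HK.
  set (E := fun y => exists h, 0 < h < a /\ y = g h).
  destruct (Lub_Rbar_correct E) as [Hub Hl].
  assert (E1 : Rbar_le (g (a/2)) (Lub_Rbar E)).
  { apply Hub. exists (a/2). split; [lra|auto]. }
  assert (E2 : Rbar_le (Lub_Rbar E) K).
  { apply Hl. intros y [h [Hh ->]]. simpl. auto. }
  unfold supq. fold E.
  destruct (Lub_Rbar E) as [L| |] eqn:EL; simpl in *; try contradiction.
  assert (P1 : forall h, 0 < h < a -> g h <= L).
  { intros h Hh. assert (Rbar_le (g h) L) by (apply Hub; exists h; auto).
    exact H. }
  assert (P2 : forall K', (forall h, 0 < h < a -> g h <= K') -> L <= K').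
  { intros K' HK'. apply (Hl (Finite K')). intros y [h [Hh ->]]. simpl. auto. }
  split; [exact P1|split; [exact P2|]].
  intros eps Heps.
  destruct (classic (exists h0, 0 < h0 < a /\ L - eps < g h0)) as [[h0 [Hh0 Hg0]]|N].
  - exists h0. split; [lra|]. intros h Hh.
    assert (g h0 <= g h) by (apply Hmono; lra).
    assert (g h <= L) by (apply P1; lra).
    apply Rabs_def1; lra.
  - exfalso. assert (L <= L - eps); [|lra].
    apply P2. intros h Hh. apply Rnot_lt_le. intro. apply N. exists h. auto.
Qed.

Lemma to_right (g : R -> R) L :
  (forall eps, 0 < eps -> exists d, 0 < d /\ forall h, 0 < h < d -> Rabs (g h - L) < eps) ->
  filterlim g (at_right 0) (Rbar_locally (Finite L)).
Proof.
  intros Hg. simpl. apply filterlim_locally. intros [eps Heps].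
  destruct (Hg eps Heps) as [d [Hd Hh]].
  exists (mkposreal d Hd). intros y Hy Hy0. simpl in *.
  unfold ball in Hy; simpl in Hy; unfold AbsRing_ball, abs, minus, plus, opp in Hy; simpl in Hy.
  rewrite Ropp_0, Rplus_0_r in Hy.
  unfold ball; simpl; unfold AbsRing_ball, abs, minus, plus, opp; simpl.
  apply Hh. split; auto. apply Rabs_def2 in Hy. lra.
Qed.

Lemma to_left (D : R -> R) L :
  (forall eps, 0 < eps -> exists d, 0 < d /\ forall h, 0 < h < d -> Rabs (- D (1 - h) - L) < eps) ->
  filterlim D (at_left 1) (Rbar_locally (Finite (- L))).
Proof.
  intros Hg. simpl. apply filterlim_locally. intros [eps Heps].
  destruct (Hg eps Heps) as [d [Hd Hh]].
  exists (mkposreal d Hd). intros y Hy Hy0. simpl in *.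
  unfold ball in Hy; simpl in Hy; unfold AbsRing_ball, abs, minus, plus, opp in Hy; simpl in Hy.
  unfold ball; simpl; unfold AbsRing_ball, abs, minus, plus, opp; simpl.
  apply Rabs_def2 in Hy.
  assert (Hq := Hh (1 - y) ltac:(lra)). replace (1 - (1 - y)) with y in Hq by ring.
  replace (D y + - - L) with (- (- D y - L)) by ring. rewrite Rabs_Ropp. exact Hq.
Qed.

Lemma ball_R (x y d : R) : Rabs (y - x) < d -> ball x d y.
Proof. intros. unfold ball; simpl; unfold AbsRing_ball, abs, minus, plus, opp; simpl. exact H. Qed.

Theorem lemmaA3 (H : R -> R) (Husc : usc_on01 H) :
  (* (a) liminf_{t -> 1} (H t - H 1)/(t - 1) > -oo  ==>  Hhat'(1-) > -oo *)
  ((exists M : R, at_left 1 (fun t => M <= (H t - H 1) / (t - 1))) ->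
   exists (D : R -> R) (l : Rbar),
     (forall s, 0 < s < 1 ->
        is_right_deriv (concave_envelope H) s (Finite (D s))) /\
     filterlim D (at_left 1) (Rbar_locally l) /\
     Rbar_lt m_infty l) /\
  (* (b) limsup_{t -> 0} (H t - H 0)/t < +oo  ==>  Hhat'(0) < +oo *)
  ((exists M : R, at_right 0 (fun t => (H t - H 0) / t <= M)) ->
   exists l : Rbar,
     is_right_deriv (concave_envelope H) 0 l /\ Rbar_lt l p_infty).
Proof.
  destruct (usc_bounded H Husc) as [B HB].
  set (f := concave_envelope H).
  assert (Hfc : concave_on01 f) by apply (env_concave H B HB).
  split.
  - intros [M [[d Hd] HM]]. simpl in HM.
    set (K := Rmin M (-((B - H 1)/d))).
    set (G := fun x => H 1 + K*(x-1)).
    assert (HGc : concave_on01 G).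
    { intros x y t _ _ _. unfold G. apply Req_le. ring. }
    assert (HB1 : H 1 <= B) by (apply HB; lra).
    assert (Hq0 : 0 <= (B - H 1)/d) by (apply Rdiv_le_0_compat; lra).
    assert (Hqd : (B - H 1)/d * d = B - H 1) by (field; lra).
    assert (HKM : K <= M) by apply Rmin_l.
    assert (HKq : K <= -((B - H 1)/d)) by apply Rmin_r.
    assert (HGH : forall x, 0 <= x <= 1 -> H x <= G x).
    { intros x Hx. unfold G. destruct (Req_dec x 1) as [->|Hx1]. lra.
      destruct (Rlt_or_le (1 - d) x) as [Hxd|Hxd].
      - assert (Hm := HM x (ball_R 1 x d ltac:(apply Rabs_def1; lra)) ltac:(lra)).
        set (q := (H x - H 1)/(x-1)) in Hm.
        assert (H x - H 1 = q*(x-1)) by (unfold q; field; lra).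
        nra.
      - assert (H x <= B) by auto. nra. }
    assert (LB : forall s, 0 < s < 1 -> forall h, 0 < h < 1 - s -> K <= diffq f s h).
    { intros s Hs h Hh. rewrite diffq_slope by lra.
      apply Rle_trans with (slope f s 1); [|apply S2; auto; lra].
      unfold slope. set (r := (f 1 - f s)/(1-s)).
      assert (f 1 - f s = r*(1-s)) by (unfold r; field; lra).
      assert (H 1 <= f 1) by (apply env_ge with B; auto; lra).
      assert (f s <= G s) by (apply env_le with B; auto; lra).
      unfold G in *. nra. }
    set (D := fun s => supq (diffq f s) (1-s)).
    assert (Hrd : forall s, 0 < s < 1 ->
      (forall h, 0 < h < 1 - s -> diffq f s h <= D s) /\
      (forall K', (forall h, 0 < h < 1 - s -> diffq f s h <= K') -> D s <= K') /\
      (forall eps, 0 < eps -> exists d, 0 < d /\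
         forall h, 0 < h < d -> Rabs (diffq f s h - D s) < eps)).
    { intros s Hs. apply (mono_lim _ _ (slope f 0 s)). lra.
      - intros h1 h2 ? ? ?. rewrite !diffq_slope by lra. apply S2; auto; lra.
      - intros h Hh. rewrite diffq_slope by lra. apply S1; auto; lra. }
    assert (DK : forall s, 0 < s < 1 -> K <= D s).
    { intros s Hs. apply Rle_trans with (diffq f s ((1-s)/2)).
      apply LB; auto; lra. apply Hrd; auto; lra. }
    assert (Dmono : forall s1 s2, 0 < s1 -> s1 < s2 -> s2 < 1 -> D s2 <= D s1).
    { intros s1 s2 ? ? ?. apply Hrd. lra. intros h Hh.
      apply Rle_trans with (diffq f s1 (s2 - s1)).
      rewrite !diffq_slope by lra. replace (s1 + (s2 - s1)) with s2 by ring.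
      apply S1; auto; lra.
      apply Hrd; lra. }
    set (g := fun u => - D (1 - u)).
    destruct (mono_lim g 1 (-K)) as [_ [_ Hlim]]. lra.
    { intros u1 u2 ? ? ?. unfold g. apply Ropp_le_contravar. apply Dmono; lra. }
    { intros u Hu. unfold g. apply Ropp_le_contravar. apply DK. lra. }
    exists D, (Finite (- supq g 1)). split; [|split].
    + intros s Hs. apply to_right. apply Hrd. exact Hs.
    + apply to_left. exact Hlim.
    + exact I.
  - intros [M [[d Hd] HM]]. simpl in HM.
    set (K := Rmax M ((B - H 0)/d)).
    set (G := fun x => H 0 + K*x).
    assert (HGc : concave_on01 G).
    { intros x y t _ _ _. unfold G. apply Req_le. ring. }
    assert (HB0 : H 0 <= B) by (apply HB; lra).
    assert (Hq0 : 0 <= (B - H 0)/d) by (apply Rdiv_le_0_compat; lra).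
    assert (Hqd : (B - H 0)/d * d = B - H 0) by (field; lra).
    assert (HKM : M <= K) by apply Rmax_l.
    assert (HKq : (B - H 0)/d <= K) by apply Rmax_r.
    assert (HGH : forall x, 0 <= x <= 1 -> H x <= G x).
    { intros x Hx. unfold G. destruct (Req_dec x 0) as [->|Hx0]. lra.
      destruct (Rlt_or_le x d) as [Hxd|Hxd].
      - assert (Hm := HM x (ball_R 0 x d ltac:(apply Rabs_def1; lra)) ltac:(lra)).
        set (q := (H x - H 0)/x) in Hm.
        assert (H x - H 0 = q*x) by (unfold q; field; lra).
        nra.
      - assert (H x <= B) by auto. nra. }
    destruct (mono_lim (diffq f 0) 1 K) as [_ [_ Hlim]]. lra.
    { intros h1 h2 ? ? ?. rewrite !diffq_slope by lra. apply S2; auto; lra. }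
    { intros h Hh. unfold diffq. replace (0 + h) with h by ring.
      set (q := (f h - f 0)/h).
      assert (f h - f 0 = q*h) by (unfold q; field; lra).
      assert (H 0 <= f 0) by (apply env_ge with B; auto; lra).
      assert (f h <= G h) by (apply env_le with B; auto; lra).
      unfold G in *. nra. }
    exists (Finite (supq (diffq f 0) 1)). split.
    + apply to_right. exact Hlim.
    + exact I.
Qed.
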